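(* Let $g\ge 1$ and consider $2g$ variables $\lambda_1,\dots,\lambda_g,\mu_1,\dots,\mu_g$ equipped with a Poisson bracket such that, for all $i,j\in\{1,\dots,g\}$, $$\{\lambda_i,\lambda_j\}=0,\qquad \{\mu_i,\mu_j\}=0,\qquad \{\lambda_i,\mu_j\}=p(\lambda_i,\mu_i)\,\delta_{ij}$$ for some function $p$ of two variables (the form of $p$ is arbitrary). Let $R_0,R_1,\dots,R_g$ be fixed (non-dynamical) functions of two variables $(\lambda,\mu)$. Define the $g\times g$ matrix $B$ and the column vector $V$ by $B_{ij}=R_j(\lambda_i,\mu_i)$ and $V_i=R_0(\lambda_i,\mu_i)$, and assume $\det B\neq 0$ (on the region considered). Define $H=(H_1,\dots,H_g)^T$ by $H=-B^{-1}V$, i.e. $H$ is the unique solution of the linear system $$\sum_{j=1}^g R_j(\lambda_i,\mu_i)H_j+R_0(\lambda_i,\mu_i)=0,\qquad i=1,\dots,g.$$ Then $\{H_i,H_j\}=0$ for all $i,j\in\{1,\dots,g\}$.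
   Context: Motivation: the $H_j$ are the dynamical moduli of a curve $\Gamma:\ R_0(\lambda,\mu)+\sum_{j=1}^g R_j(\lambda,\mu)H_j=0$ in $\mathbb{C}^2$, determined by requiring that the curve passes through the $g$ points $(\lambda_i,\mu_i)$. The Poisson bracket is extended to smooth functions of the $\lambda_i,\mu_i$ by the Leibniz rule. *)

(* Defs.v *)
From HB Require Import structures.
From mathcomp Require Import all_boot all_order all_algebra.
From mathcomp Require Import all_classical all_reals all_analysis.
Set Implicit Arguments. Unset Strict Implicit. Unset Printing Implicit Defensive.
Import Order.TTheory GRing.Theory Num.Theory.
Import numFieldNormedType.Exports.
Local Open Scope ring_scope.

Section Defs.
Variables (R : realType) (g : nat).

Definition state := ('rV[R]_g * 'rV[R]_g)%type.

Definition lam (z : state) (i : 'I_g) : R := z.1 0 i.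
Definition mu (z : state) (i : 'I_g) : R := z.2 0 i.

(* B_ij = R_j(lambda_i, mu_i), with Rs j standing for R_{j+1}. *)
Definition Bmat (Rs : 'I_g -> R * R -> R) (z : state) : 'M[R]_g :=
  \matrix_(i, j) Rs j (lam z i, mu z i).

Definition Vvec (R0 : R * R -> R) (z : state) : 'cV[R]_g :=
  \col_i R0 (lam z i, mu z i).

Definition Hvec (R0 : R * R -> R) (Rs : 'I_g -> R * R -> R) (z : state)
  : 'cV[R]_g := - (invmx (Bmat Rs z) *m Vvec R0 z).

Definition Hcomp R0 Rs (i : 'I_g) (z : state) : R := Hvec R0 Rs z i 0.

Definition dlam (k : 'I_g) : state := (delta_mx 0 k, 0).
Definition dmu (k : 'I_g) : state := (0, delta_mx 0 k).

(* Poisson bracket obtained by extending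
   {lambda_i,lambda_j}=0, {mu_i,mu_j}=0, {lambda_i,mu_j}=p(lambda_i,mu_i) delta_ij
   to functions of (lambda, mu) by the Leibniz rule. *)
Definition pbracket (p : R -> R -> R) (F G : state -> R) (z : state) : R :=
  \sum_(k < g) p (lam z k) (mu z k) *
     ('D_(dlam k) F z * 'D_(dmu k) G z - 'D_(dmu k) F z * 'D_(dlam k) G z).

End Defs.

(* Main.v *)
Require Import Defs.
From HB Require Import structures.
From mathcomp Require Import all_boot all_order all_algebra.
From mathcomp Require Import all_classical all_reals all_analysis.
From mathcomp Require Import fingroup perm ring.
Import Order.TTheory GRing.Theory Num.Theory.
Import numFieldNormedType.Exports.
Local Open Scope ring_scope.

Section Helpers.
Local Open Scope classical_set_scope.

Lemma cvg_det (R : realType) (T : Type) (F : set_system T) (FF : Filter F)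
  n (M : T -> 'M[R]_n) (A : 'M[R]_n) :
  (forall i j, M x i j @[x --> F] --> A i j) ->
  \det (M x) @[x --> F] --> \det A.
Proof.
move=> HM; rewrite /determinant.
have -> : (fun x => \det (M x)) = (fun x => \sum_(s : 'S_n) (-1) ^+ s * \prod_i M x i (s i)).
  by [].
apply: cvg_big => //; first exact: pseudometric_normed_Zmodule.add_continuous.
move=> s _; apply: cvgM; first exact: cvg_cst.
apply: cvg_big => //; first exact: mul_continuous.
Qed.

Lemma cvg_invmx_entry (R : realType) (T : Type) (F : set_system T) (FF : ProperFilter F)
  n (M : T -> 'M[R]_n) (A : 'M[R]_n) :
  (forall i j, M x i j @[x --> F] --> A i j) -> A \in unitmx ->
  forall i j, invmx (M x) i j @[x --> F] --> invmx A i j.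
Proof.
move=> HM UA i j.
have dA : \det A != 0 by rewrite -unitfE -unitmxE.
have dc : \det (M x) @[x --> F] --> \det A by apply: cvg_det.
have nz : \forall x \near F, \det (M x) != 0 by apply: cvgr_neq0 dc dA.
have -> : invmx A i j = (\det A)^-1 * cofactor A j i.
  by rewrite /invmx UA !mxE.
apply: (@cvg_trans _ (((\det (M x))^-1 * cofactor (M x) j i) @[x --> F])); last first.
  apply: cvgM; first exact: (cvgV dA dc).
  rewrite /cofactor; apply: cvgM; first exact: cvg_cst.
  apply: cvg_det => a b.
  have -> : (fun x => row' j (col' i (M x)) a b) = (fun x => M x (lift j a) (lift i b)).
    by apply/funext => x; rewrite !mxE.
  rewrite !mxE; exact: HM.
apply: near_eq_cvg; near=> x.
have hx : \det (M x) != 0 by near: x.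
by rewrite /invmx unitmxE unitfE hx !mxE.
Unshelve. all: by end_near.
Qed.

Lemma idR (R : realType) : (fun t : R => t) @ 0^' --> (0:R).
Proof. exact: cvg_within_filter. Qed.

Lemma hv_lam (R : realType) g (z : state R g) k t i :
  (lam (t *: @dlam R g k + z) i, mu (t *: @dlam R g k + z) i) =
  (lam z i, mu z i) + (((i == k)%:R * t) *: ((1, 0) : R * R)).
Proof.
rewrite /lam /mu /dlam /=. rewrite !mxE /=.
congr pair; simpl; last by rewrite scaler0 mulr0 addr0 add0r.
rewrite addrC mulrC; congr (_ + _). by rewrite -[LHS]mulr1.
Qed.

Lemma hv_mu (R : realType) g (z : state R g) k t i :
  (lam (t *: @dmu R g k + z) i, mu (t *: @dmu R g k + z) i) =
  (lam z i, mu z i) + (((i == k)%:R * t) *: ((0, 1) : R * R)).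
Proof.
rewrite /lam /mu /dmu /=. rewrite !mxE /=.
congr pair; simpl; first by rewrite scaler0 mulr0 addr0 add0r.
rewrite addrC mulrC; congr (_ + _); by rewrite -[LHS]mulr1.
Qed.

Definition psi (R : realType) g (R0 : R * R -> R) (Rs : 'I_g -> R * R -> R)
  (z : state R g) : R * R -> R :=
  R0 + \sum_(j < g) (Hvec R0 Rs z j 0 *: Rs j).
Arguments psi {R g}.

Variables (R : realType) (g : nat) (R0 : R * R -> R) (Rs : 'I_g -> R * R -> R).
Hypotheses (dR0 : forall x, differentiable R0 x)
  (dRs : forall j x, differentiable (Rs j) x).
Variable z : state R g.
Hypothesis Bu : Bmat Rs z \in unitmx.

Lemma psiE y : psi R0 Rs z y = R0 y + \sum_j Rs j y * Hvec R0 Rs z j 0.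
Proof.
rewrite /psi /= fct_sumE; congr (_ + _); apply: eq_bigr => j _ /=.
by rewrite mulrC.
Qed.

Lemma psi_diff y : differentiable (psi R0 Rs z) y.
Proof.
apply: differentiableD => //; apply: differentiable_sum => j.
exact: differentiableZ.
Qed.

Lemma psi0 i : psi R0 Rs z (lam z i, mu z i) = 0.
Proof.
have : Bmat Rs z *m Hvec R0 Rs z + Vvec R0 z = 0.
  by rewrite /Hvec mulmxN mulmxA mulmxV // mul1mx addNr.
move/matrixP/(_ i 0); rewrite !mxE => <-.
rewrite psiE addrC; congr (_ + _); apply: eq_bigr => j _; rewrite !mxE.
done.
Qed.


Lemma key (v : state R g) (w : R * R) (k : 'I_g)
  (hv : forall t i, (lam (t *: v + z) i, mu (t *: v + z) i)
          = (lam z i, mu z i) + ((i == k)%:R * t) *: w) (i : 'I_g) :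
  'D_v (Hcomp R0 Rs i) z
    = - invmx (Bmat Rs z) i k * 'D_w (psi R0 Rs z) (lam z k, mu z k).
Proof.
pose Bt t := Bmat Rs (t *: v + z).
have BtE t a b : Bt t a b = Rs b ((lam z a, mu z a) + ((a == k)%:R * t) *: w).
  by rewrite /Bt mxE hv.
have Bcvg a b : Bt t a b @[t --> 0^'] --> Bmat Rs z a b.
  have -> : (fun t => Bt t a b) =
     (Rs b \o (fun t => (lam z a, mu z a) + ((a == k)%:R * t) *: w)).
    by apply/funext => t; rewrite BtE.
  rewrite mxE.
  apply: cvg_comp; last exact: differentiable_continuous.
  suff H : ((lam z a, mu z a) + ((a == k)%:R * t) *: w) @[t --> 0^'] -->
     ((lam z a, mu z a) + ((a == k)%:R * 0) *: w).
    by move: H; rewrite mulr0 scale0r addr0.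
  apply: cvgD; first exact: cvg_cst.
  apply: cvgZ; last exact: cvg_cst.
  apply: cvgM; first exact: cvg_cst.
  exact: idR.
have invcvg : invmx (Bt t) i k @[t --> 0^'] --> invmx (Bmat Rs z) i k.
  exact: cvg_invmx_entry.
have nearU : \forall t \near 0^', Bt t \in unitmx.
  have dc : \det (Bt t) @[t --> 0^'] --> \det (Bmat Rs z) by apply: cvg_det.
  have dA : \det (Bmat Rs z) != 0 by rewrite -unitfE -unitmxE.
  have nz : \forall t \near 0^', \det (Bt t) != 0 by apply: cvgr_neq0 dc dA.
  by near=> t; rewrite unitmxE unitfE; near: t.
rewrite /derive; apply: cvg_lim; first exact: norm_hausdorff.
apply: (@cvg_trans _ ((- invmx (Bt t) i k * (t^-1 *: ((psi R0 Rs z \o shift (lam z k, mu z k)) (t *: w) - psi R0 Rs z (lam z k, mu z k)))) @[t --> 0^'])); last first.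
  apply: cvgM; first exact: cvgN.
  exact: (diff_derivable (psi_diff _)).
apply: near_eq_cvg; near=> t.
have U : Bt t \in unitmx by near: t.
have Ent l : (Bt t *m Hvec R0 Rs z + Vvec R0 (t *: v + z)) l 0 =
    psi R0 Rs z ((lam z l, mu z l) + ((l == k)%:R * t) *: w).
  rewrite -hv psiE addrC [in LHS]mxE; congr (_ + _); first by rewrite /Vvec mxE.
  by rewrite mxE; apply: eq_bigr => j _; rewrite /Bt /Bmat mxE.
have Hd : Hvec R0 Rs (t *: v + z) - Hvec R0 Rs z =
    - (invmx (Bt t) *m (Bt t *m Hvec R0 Rs z + Vvec R0 (t *: v + z))).
  rewrite mulmxDr mulmxA mulVmx // mul1mx opprD addrC.
  done.
move: Hd Ent.
set H0 := Hvec R0 Rs z; set Ht := Hvec R0 Rs (t *: v + z).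
set E := (Bt t *m H0 + _); set Ai := invmx (Bt t).
move=> Hd Ent.
have : (Ht - H0) i 0 = (- (Ai *m E)) i 0 by rewrite Hd.
rewrite !mxE [X in _ = - X](bigD1 k) //= [X in _ = - (_ + X)]big1 ?addr0; last first.
  move=> l /negPf lk; rewrite Ent lk mul0r scale0r addr0.
  by rewrite psi0 mulr0.
rewrite Ent eqxx mul1r.
rewrite /Hcomp /Hvec /= !mxE => ->.
by rewrite psi0 subr0 addrC mulNr scalerN scalerAr.
Unshelve. all: by end_near.
Qed.

End Helpers.

Theorem theorem1 (R : realType) (g : nat) (hg : (0 < g)%N)
  (p : R -> R -> R) (R0 : R * R -> R) (Rs : 'I_g -> R * R -> R) :
  (forall x : R * R, differentiable R0 x) ->
  (forall (j : 'I_g) (x : R * R), differentiable (Rs j) x) ->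
  forall z : state R g, Bmat Rs z \in unitmx ->
  forall i j : 'I_g,
    pbracket p (Hcomp R0 Rs i) (Hcomp R0 Rs j) z = 0.
Proof.
move=> dR0 dRs z Bu i j; rewrite /pbracket; apply: big1 => k _.
rewrite !(@key R g R0 Rs dR0 dRs z Bu _ _ k (@hv_lam R g z k)).
rewrite !(@key R g R0 Rs dR0 dRs z Bu _ _ k (@hv_mu R g z k)).
ring.
Qed.
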